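(* Let $d$ be a positive square-free integer, $K=\mathbb{Q}(\sqrt{-d})$, $\mathcal{O}$ its ring of integers, $R$ the set of roots of unity in $K$, $K_1=\{z\in K: z\overline z=1\}$, and $F(d)=\min_{z\in K_1\setminus R}d(z)$. Let $\mathcal{J}$ be the set of proper nonzero ideals $\pi$ of $\mathcal{O}$ such that $\pi$ and $\overline\pi$ are coprime and $\pi^2$ is principal. Then $$F(d)=\min_{\pi\in\mathcal{J}}N_{K/\mathbb{Q}}(\pi).$$ In particular $F(1)=5$ and $F(3)=7$.
   Context: For $z\in K^*$, $\pi_z=\{a\in\mathcal{O}: az\in\mathcal{O}\}$ and $d(z)=N_{K/\mathbb{Q}}(\pi_z)=\mathrm{Card}\,\mathcal{O}/\pi_z$. $\overline{\pi}$ denotes the complex conjugate ideal. *)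

(* Defs.v *)
(* K = Q(sqrt(-d)) realised inside the algebraic complex numbers algC. *)
From HB Require Import structures.
From mathcomp Require Import all_boot all_order all_algebra all_field.
Set Implicit Arguments. Unset Strict Implicit. Unset Printing Implicit Defensive.
Import Order.TTheory GRing.Theory Num.Theory.
Local Open Scope ring_scope.

Definition squarefree_nat (d : nat) : Prop :=
  forall p : nat, prime p -> ~~ (p * p %| d)%N.

Definition inK (d : nat) (z : algC) : Prop :=
  exists a b : rat, z = ratr a + ratr b * sqrtC (- (d%:R)).

Definition inO (d : nat) (z : algC) : Prop := inK d z /\ z \in Aint.

Definition is_ideal (d : nat) (I : algC -> Prop) : Prop :=
  (forall x, I x -> inO d x) /\ I 0 /\
  (forall x y, I x -> I y -> I (x + y)) /\
  (forall a x, inO d a -> I x -> I (a * x)).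

Definition ideal_nonzero (I : algC -> Prop) : Prop := exists x, I x /\ x <> 0.
Definition ideal_proper (I : algC -> Prop) : Prop := ~ I 1.

Definition conj_ideal (I : algC -> Prop) : algC -> Prop := fun x => I (x^*).

Definition ideals_coprime (I J : algC -> Prop) : Prop :=
  exists a b, I a /\ J b /\ a + b = 1.

Definition ideal_mul (I J : algC -> Prop) : algC -> Prop :=
  fun x => exists s : seq (algC * algC),
    (forall p, p \in s -> I p.1 /\ J p.2) /\ x = \sum_(p <- s) p.1 * p.2.

Definition ideal_principal (d : nat) (I : algC -> Prop) : Prop :=
  exists g, inO d g /\ forall x, I x <-> exists a, inO d a /\ x = a * g.

(* Card O/I = n : a complete system of n pairwise incongruent residues *)
Definition ideal_index (d : nat) (I : algC -> Prop) (n : nat) : Prop :=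
  exists f : 'I_n -> algC,
    (forall i, inO d (f i)) /\
    (forall i j, I (f i - f j) -> i = j) /\
    (forall x, inO d x -> exists i, I (x - f i)).

Definition pi_ (d : nat) (z : algC) : algC -> Prop :=
  fun a => inO d a /\ inO d (a * z).

Definition root_of_unity (z : algC) : Prop := exists n : nat, (0 < n)%N /\ z ^+ n = 1.

Definition Dvals (d : nat) (m : nat) : Prop :=
  exists z, inK d z /\ z * z^* = 1 /\ ~ root_of_unity z /\ ideal_index d (pi_ d z) m.

Definition Jnorms (d : nat) (m : nat) : Prop :=
  exists I, is_ideal d I /\ ideal_nonzero I /\ ideal_proper I /\
    ideals_coprime I (conj_ideal I) /\ ideal_principal d (ideal_mul I I) /\
    ideal_index d I m.

Definition least_nat (P : nat -> Prop) (m : nat) : Prop :=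
  P m /\ forall k, P k -> (m <= k)%N.

(* Main.v *)
Require Import Defs.
From HB Require Import structures.
From mathcomp Require Import all_boot all_order all_algebra all_field.
From mathcomp Require Import ring lra zify.
From Stdlib Require Import Classical ClassicalEpsilon.
Require Import Defs.
Set Implicit Arguments. Unset Strict Implicit. Unset Printing Implicit Defensive.
Import Order.TTheory GRing.Theory Num.Theory.
Local Open Scope ring_scope.


Lemma quadA (x t n : algC) : t \is a Num.int -> n \is a Num.int -> x ^+ 2 - t * x + n = 0 -> x \in Aint.
Proof.
move=> ht hn hx.
have hp : 'X * ('X - t%:P) + n%:P \is a polyOver Num.int.
  apply/polyOverP=> i; rewrite coefD coefXM coefC coefB coefX coefC.
  case: i => [|[|[|i]]] /=; rewrite ?addr0 ?add0r ?subr0 ?sub0r ?rpredN ?rpred0 ?rpred1 //.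
apply: (@root_monic_Aint ('X * ('X - t%:P) + n%:P)) hp.
- by rewrite /root !hornerE -hx; apply/eqP; ring.
- rewrite monicE lead_coefDl ?lead_coefM ?lead_coefX ?lead_coefXsubC ?mulr1 //.
  rewrite size_polyC size_mul ?polyX_eq0 ?polyXsubC_eq0 // size_polyX size_XsubC.
  by case: (n != 0).
Qed.

Lemma trnormA (x : algC) : x + x^* \is a Num.int -> x * x^* \is a Num.int -> x \in Aint.
Proof. by move=> h1 h2; apply: (quadA h1 h2); ring. Qed.

Lemma AintJ (x : algC) : (x^* \in Aint) = (x \in Aint).
Proof. exact: (Aint_aut Num.Def.conjC x). Qed.

Lemma conj_ratr (a : rat) : (ratr a : algC)^* = ratr a.
Proof. by rewrite conj_Crat ?Crat_rat. Qed.

Lemma conjD (x y : algC) : (x + y)^* = x^* + y^*. Proof. exact: rmorphD. Qed.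
Lemma conjB (x y : algC) : (x - y)^* = x^* - y^*. Proof. exact: rmorphB. Qed.
Lemma conjM (x y : algC) : (x * y)^* = x^* * y^*. Proof. exact: rmorphM. Qed.
Lemma conjN (x : algC) : (- x)^* = - x^*. Proof. exact: rmorphN. Qed.
Lemma conjV (x : algC) : (x^-1)^* = (x^*)^-1. Proof. exact: fmorphV. Qed.
Lemma conjX (x : algC) n : (x ^+ n)^* = (x^*) ^+ n. Proof. exact: rmorphXn. Qed.
Lemma conjK (x : algC) : (x^*)^* = x. Proof. exact: conjCK. Qed.
Lemma conj_int (k : int) : (k%:~R : algC)^* = k%:~R. Proof. exact: rmorph_int. Qed.
Lemma conj_nat (k : nat) : (k%:R : algC)^* = k%:R. Proof. exact: rmorph_nat. Qed.
Definition conjE := (conj_ratr, conjD, conjB, conjM, conjN, conjV, conjX, conjK, conj_int, conj_nat).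

Section Quad.
Variable d : nat.
Hypothesis hd : (0 < d)%N.
Local Notation s := (sqrtC (- (d%:R : algC))).

Lemma s2 : s * s = - d%:R.
Proof. by rewrite -expr2 sqrtCK. Qed.

Lemma sJ : s^* = - s.
Proof.
have h2 : (s^*) * (s^*) = s * s by rewrite -rmorphM s2 rmorphN rmorph_nat.
have : (s^* - s) * (s^* + s) = 0 by rewrite mulrDr !mulrBl h2 [s * _]mulrC; ring.
case/eqP; rewrite mulf_eq0 => /orP [|]; last by rewrite addr_eq0 => /eqP.
rewrite subr_eq0 => /eqP/CrealP; rewrite realEsqr expr2 s2 oppr_ge0 => h.
by move: h; rewrite lern0 => /eqP h; move: hd; rewrite h.
Qed.

Lemma inK_rat (a : rat) : inK d (ratr a).
Proof. by exists a, 0; rewrite rmorph0 mul0r addr0. Qed.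

Lemma inK_s : inK d s.
Proof. by exists 0, 1; rewrite rmorph0 rmorph1 add0r mul1r. Qed.

Lemma inK_add x y : inK d x -> inK d y -> inK d (x + y).
Proof.
move=> [a [b ->]] [c [e ->]]; exists (a + c), (b + e).
rewrite !rmorphD /=; ring.
Qed.

Lemma inK_opp x : inK d x -> inK d (- x).
Proof. move=> [a [b ->]]; exists (- a), (- b); rewrite !rmorphN /=; ring. Qed.

Lemma inK_mul x y : inK d x -> inK d y -> inK d (x * y).
Proof.
move=> [a [b ->]] [c [e ->]]; exists (a * c - d%:R * b * e), (a * e + b * c).
rewrite !(rmorphD, rmorphB, rmorphM, rmorph_nat) /=.
apply/eqP; rewrite -subr_eq0; apply/eqP.
transitivity ((s * s + d%:R) * (ratr b * ratr e)); first ring.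
by rewrite s2 addNr mul0r.
Qed.

Lemma inK_conj x : inK d x -> inK d x^*.
Proof.
move=> [a [b ->]]; exists a, (- b).
by rewrite !conjE sJ !rmorphN /=; ring.
Qed.

Lemma inK_inv x : inK d x -> inK d x^-1.
Proof.
move=> [a [b ->]].
have [N0|Nn0] := eqVneq (a ^+ 2 + d%:R * b ^+ 2) 0.
  have hd' : (0 : rat) < d%:R by rewrite ltr0n.
  have ha : a = 0 by apply/eqP; rewrite -sqrf_eq0; apply/eqP; nra.
  have hb : b = 0 by apply/eqP; rewrite -sqrf_eq0; apply/eqP; nra.
  by rewrite ha hb !rmorph0 mul0r addr0 invr0; exists 0, 0; rewrite !rmorph0 mul0r addr0.
set N := a ^+ 2 + d%:R * b ^+ 2.
exists (a / N), (- b / N).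
set z := ratr a + ratr b * s.
have zw : z * (ratr (a / N) + ratr (- b / N) * s) = 1.
  rewrite !(rmorphM, rmorphN, fmorphV) /= /z.
  have hN : ratr N = ratr a ^+ 2 - ratr b ^+ 2 * (s * s) :> algC.
    by rewrite s2 /N rmorphD rmorphM rmorphXn rmorphXn rmorph_nat /=; ring.
  have hN0 : (ratr N : algC) != 0 by rewrite fmorph_eq0.
  apply: (mulIf hN0); rewrite mul1r -mulrA.
  transitivity ((ratr a + ratr b * s) * (ratr a - ratr b * s) * ((ratr N)^-1 * ratr N) : algC); first ring.
  by rewrite mulVf // mulr1 hN; ring.
have z0 : z != 0 by apply/eqP => z0; move: zw; rewrite z0 mul0r => /eqP; rewrite eq_sym oner_eq0.
by apply: (mulfI z0); rewrite zw mulfV.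
Qed.

Lemma inK_int (k : int) : inK d k%:~R.
Proof. by rewrite -(rmorph_int (ratr : rat -> algC)); apply: inK_rat. Qed.

Lemma inK_trn x : inK d x -> (x + x^* \in Crat) /\ (x * x^* \in Crat).
Proof.
move=> [a [b ->]]; rewrite !conjE sJ; split.
  have -> : ratr a + ratr b * s + (ratr a + ratr b * - s) = ratr (a + a) :> algC.
    by rewrite rmorphD /=; ring.
  exact: Crat_rat.
have -> : (ratr a + ratr b * s) * (ratr a + ratr b * - s) = ratr (a ^+ 2 + d%:R * b ^+ 2) :> algC.
  rewrite rmorphD rmorphM !rmorphXn rmorph_nat /=.
  transitivity (ratr a ^+ 2 - ratr b ^+ 2 * (s * s) : algC); first ring.
  by rewrite s2; ring.
exact: Crat_rat.
Qed.

Lemma inO_add x y : inO d x -> inO d y -> inO d (x + y).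
Proof. by move=> [? ?] [? ?]; split; [apply: inK_add | rewrite rpredD]. Qed.
Lemma inO_mul x y : inO d x -> inO d y -> inO d (x * y).
Proof. by move=> [? ?] [? ?]; split; [apply: inK_mul | rewrite rpredM]. Qed.
Lemma inO_opp x : inO d x -> inO d (- x).
Proof. by move=> [? ?]; split; [apply: inK_opp | rewrite rpredN]. Qed.
Lemma inO_sub x y : inO d x -> inO d y -> inO d (x - y).
Proof. by move=> hx hy; apply: inO_add hx (inO_opp hy). Qed.
Lemma inO_conj x : inO d x -> inO d x^*.
Proof. by move=> [? ?]; split; [apply: inK_conj | rewrite AintJ]. Qed.
Lemma inO_int (k : int) : inO d k%:~R.
Proof. by split; [apply: inK_int | apply: Aint_int]. Qed.
Lemma inO_nat (k : nat) : inO d k%:R.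
Proof. by have := inO_int k. Qed.
Lemma inO_0 : inO d 0. Proof. exact: (inO_nat 0). Qed.
Lemma inO_1 : inO d 1. Proof. exact: (inO_nat 1). Qed.

Lemma inO_tr x : inO d x -> x + x^* \is a Num.int.
Proof.
move=> [hK hA]; apply: Cint_rat_Aint; first by case: (inK_trn hK).
by rewrite rpredD // AintJ.
Qed.
Lemma inO_norm x : inO d x -> x * x^* \is a Num.int.
Proof.
move=> [hK hA]; apply: Cint_rat_Aint; first by case: (inK_trn hK).
by rewrite rpredM // AintJ.
Qed.

Lemma inO_trn x : inK d x -> x + x^* \is a Num.int -> x * x^* \is a Num.int -> inO d x.
Proof. by move=> hK h1 h2; split => //; apply: trnormA. Qed.

Lemma inO_sum (T : eqType) (S : seq T) (F : T -> algC) :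
  (forall i, i \in S -> inO d (F i)) -> inO d (\sum_(i <- S) F i).
Proof.
elim: S => [|x S IH] h; first by rewrite big_nil; exact: inO_0.
rewrite big_cons; apply: inO_add; first by apply: h; rewrite mem_head.
by apply: IH => i hi; apply: h; rewrite in_cons hi orbT.
Qed.

End Quad.


Lemma least_exists (P : nat -> Prop) : (exists n, P n) -> exists m, least_nat P m.
Proof.
move=> [n Pn].
suff H : forall N n, (n <= N)%N -> P n -> exists m, least_nat P m by exact: (H n n).
elim=> [|N IH] k hk Pk.
  by exists 0%N; split; [move: hk; rewrite leqn0 => /eqP <- | move=> ? _].
case: (classic (exists j, (j < k)%N /\ P j)) => [[j [hj Pj]]|hno].
  by apply: (IH j) => //; rewrite -ltnS (leq_trans hj hk).
exists k; split => // j Pj; rewrite leqNgt; apply/negP => hj; apply: hno; by exists j.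
Qed.

Section Ideal.
Variable d : nat.
Hypothesis hd : (0 < d)%N.
Variable I : algC -> Prop.
Hypothesis hI : is_ideal d I.

Lemma I_O x : I x -> inO d x. Proof. by case: hI => h _; apply: h. Qed.
Lemma I_0 : I 0. Proof. by case: hI => _ []. Qed.
Lemma I_add x y : I x -> I y -> I (x + y). Proof. by case: hI => _ [_ []] h _; apply: h. Qed.
Lemma I_mul a x : inO d a -> I x -> I (a * x). Proof. by case: hI => _ [_ []] _ h; apply: h. Qed.
Lemma I_mulr a x : inO d a -> I x -> I (x * a). Proof. by rewrite mulrC; apply: I_mul. Qed.
Lemma I_opp x : I x -> I (- x).
Proof. by move=> h; rewrite -mulN1r; apply: I_mul => //; apply: inO_opp; apply: inO_1. Qed.
Lemma I_sub x y : I x -> I y -> I (x - y). Proof. by move=> hx hy; apply: I_add hx (I_opp hy). Qed.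
Lemma I_int (k : int) x : I x -> I (k%:~R * x). Proof. by apply: I_mul; apply: inO_int. Qed.
Lemma I_sum (T : eqType) (S : seq T) (F : T -> algC) :
  (forall i, i \in S -> I (F i)) -> I (\sum_(i <- S) F i).
Proof.
elim: S => [|x S IH] h; first by rewrite big_nil; exact: I_0.
rewrite big_cons; apply: I_add; first by apply: h; rewrite mem_head.
by apply: IH => i hi; apply: h; rewrite in_cons hi orbT.
Qed.

Lemma conj_is_ideal : is_ideal d (conj_ideal I).
Proof.
rewrite /conj_ideal; split; [|split; [|split]].
- by move=> x /I_O /(inO_conj hd); rewrite conjK.
- by rewrite (rmorph0 Num.conj); exact: I_0.
- by move=> x y hx hy; rewrite conjD; apply: I_add.
- by move=> a x ha hx; rewrite conjM; apply: I_mul => //; apply: (inO_conj hd).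
Qed.

Definition minpos (n : nat) := (0 < n)%N /\ I n%:R /\ forall k, (0 < k < n)%N -> ~ I k%:R.

Lemma minpos_exists : ideal_nonzero I -> exists n, minpos n.
Proof.
move=> [x [hx x0]].
have hN : I (x^* * x) by apply: I_mul => //; apply/(inO_conj hd)/I_O.
have Nint : x * x^* \is a Num.int by apply: (inO_norm hd); apply: I_O hx.
have Npos : 0 < x * x^* by rewrite mul_conjC_gt0; apply/eqP.
have /natrP [k hk] : x * x^* \is a Num.nat by rewrite -intrEge0 // ltW.
have hk0 : (0 < k)%N by rewrite -(ltr0n algC) -hk.
have Ik : I k%:R by rewrite -hk mulrC.
have [m [[m0 Im] hm]] := @least_exists (fun k => (0 < k)%N /\ I k%:R) (ex_intro _ k (conj hk0 Ik)).
exists m; split => //; split => // j /andP [j0 jm] Ij.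
by have := hm j (conj j0 Ij); rewrite leqNgt jm.
Qed.

Variable n : nat.
Hypothesis hn : minpos n.

Lemma minpos_dvd (k : int) : I k%:~R -> exists q : int, k = q * n%:Z.
Proof.
case: hn => n0 [In hmin] Ik.
have nz : (n%:Z != 0) by rewrite -lt0n.
exists (k %/ n)%Z.
have r0 := modz_ge0 k nz; have rn := ltz_pmod k (n0 : (0 < n%:Z)).
have e := divz_eq k n.
set r := (k %% n)%Z in r0 rn e.
have Ir : I r%:~R.
  have e' : r = k + (- (k %/ n)%Z) * n%:Z by rewrite {1}e; ring.
  have -> : r%:~R = k%:~R + (- (k %/ n)%Z) %:~R * (n%:R : algC).
    by rewrite e' intrD intrM.
  by apply: I_add => //; apply: I_int.
have [rn' er] : exists rn' : nat, r = rn'%:Z by exists (absz r); rewrite gez0_abs.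
have : rn' = 0%N.
  apply/eqP; rewrite -leqn0 leqNgt; apply/negP => h.
  apply: (hmin rn'); first by rewrite h /=; rewrite er ltz_nat in rn.
  by rewrite er in Ir.
by move=> h0; rewrite er h0 addr0 in e.
Qed.

Lemma minpos_nat_inj (i j : nat) : (i < n)%N -> (j < n)%N -> I (i%:R - j%:R) -> i = j.
Proof.
case: hn => n0 [In hmin] hi hj hij.
case: (ltngtP i j) => // h; exfalso.
- have H := hmin (j - i)%N; apply: H; first by apply/andP; split; clear -h hi hj; lia.
  have -> : ((j - i)%N%:R : algC) = - (i%:R - j%:R) by rewrite natrB ?(ltnW h) // opprB.
  exact: I_opp hij.
- have H := hmin (i - j)%N; apply: H; first by apply/andP; split; clear -h hi hj; lia.
  by rewrite natrB ?(ltnW h).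
Qed.

Lemma index_ge (m : nat) : ideal_index d I m -> (n <= m)%N.
Proof.
move=> [f [fO [finj fsurj]]].
have H : forall i : 'I_n, exists j : 'I_m, I ((i : nat)%:R - f j).
  by move=> i; apply: fsurj; apply: inO_nat.
pose g := fun i : 'I_n => proj1_sig (constructive_indefinite_description _ (H i)).
have gP : forall i : 'I_n, I ((i : nat)%:R - f (g i)).
  by move=> i; rewrite /g; case: constructive_indefinite_description.
have ginj : injective g.
  move=> i i' e; apply: val_inj; apply: minpos_nat_inj; [exact: ltn_ord | exact: ltn_ord|].
  have := I_sub (gP i) (gP i'); rewrite e.
  by rewrite opprB addrA subrK.
by have := leq_card g ginj; rewrite !card_ord.
Qed.

Hypothesis hcop : ideals_coprime I (conj_ideal I).

Lemma index_eq : ideal_index d I n.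
Proof.
case: hn => n0 [In hmin].
exists (fun i : 'I_n => (i : nat)%:R); split; [|split].
- by move=> i; apply: inO_nat.
- by move=> i j h; apply: val_inj; apply: minpos_nat_inj; [exact: ltn_ord | exact: ltn_ord | exact: h].
move=> x hx.
case: hcop => a [b [Ia [Ib ab]]]; rewrite /conj_ideal in Ib.
have tint : x * a^* + x^* * a \is a Num.int.
  have := inO_tr hd (inO_mul hx (inO_conj hd (I_O Ia))).
  by rewrite conjM conjK.
have Ixt : I (x - (x * a^* + x^* * a)).
  have hb : a^* + b^* = 1 by rewrite -conjD ab (rmorph1 Num.conj).
  have -> : x - (x * a^* + x^* * a) = x * b^* - x^* * a.
    transitivity (x * (a^* + b^*) - (x * a^* + x^* * a)); first by rewrite hb mulr1.
    ring.
  by apply: I_sub; apply: I_mul => //; apply: (inO_conj hd) hx.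
case/intrP: tint => k ek.
have nz : (n%:Z != 0) by rewrite -lt0n.
have r0 := modz_ge0 k nz; have rn := ltz_pmod k (n0 : (0 < n%:Z)).
have e := divz_eq k n.
have [r er] : exists r : nat, (k %% n)%Z = r%:Z by exists (absz (k %% n)%Z); rewrite gez0_abs.
have rlt : (r < n)%N by rewrite er ltz_nat in rn.
exists (Ordinal rlt) => /=.
have -> : x - r%:R = (x - (x * a^* + x^* * a)) + (k %/ n)%Z%:~R * n%:R.
  have e2 : k = (k %/ n)%Z * n + r%:Z by rewrite -er.
  have -> : (r%:R : algC) = k%:~R - (k %/ n)%Z%:~R * n%:R.
    by rewrite {1}e2 intrD intrM; ring.
  rewrite ek; ring.
by apply: I_add => //; apply: I_int.
Qed.

End Ideal.


Lemma RU_Aint (z : algC) : root_of_unity z -> z \in Aint.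
Proof.
by move=> [n [n0 hz]]; apply: (Aint_unity_root n0); rewrite unity_rootE hz.
Qed.

Lemma sum_mult (S : seq (algC * algC)) (F : algC * algC -> algC) (g : algC) (P : algC -> Prop) :
  P 0 -> (forall a b, P a -> P b -> P (a + b)) ->
  (forall p, p \in S -> exists c, P c /\ F p = c * g) ->
  exists c, P c /\ \sum_(p <- S) F p = c * g.
Proof.
move=> P0 PD; elim: S => [|x S IH] h; first by exists 0; rewrite big_nil mul0r.
have [c1 [Pc1 e1]] := h x (mem_head _ _).
have [c2 [Pc2 e2]] : exists c, P c /\ \sum_(p <- S) F p = c * g.
  by apply: IH => p hp; apply: h; rewrite in_cons hp orbT.
by exists (c1 + c2); split; [apply: PD | rewrite big_cons e1 e2 mulrDl].
Qed.

Section P1.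
Variable d : nat.
Hypothesis hd : (0 < d)%N.

Lemma RU_tr (z : algC) : inK d z -> root_of_unity z -> z + z^* \is a Num.int.
Proof.
move=> hK hR; apply: Cint_rat_Aint; first by case: (inK_trn hd hK).
by rewrite rpredD ?AintJ // RU_Aint.
Qed.

Lemma O_unit_RU (z : algC) : inO d z -> z * z^* = 1 -> root_of_unity z.
Proof.
move=> hz h1.
have /intrP [t et] := inO_tr hd hz.
have hT : (t%:~R : algC) ^+ 2 <= 4.
  have e : (t%:~R : algC) ^+ 2 - 4 = - ((z - z^*) * (z - z^*)^*).
    rewrite -et conjB conjK; transitivity ((z + z^*) ^+ 2 - 4 * (z * z^*)); first by rewrite h1 mulr1.
    ring.
  by rewrite -subr_le0 e oppr_le0 mul_conjC_ge0.
have ht : (t ^+ 2 <= 4)%R.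
  by rewrite -(ler_int algC) rmorphXn /=.
have hz2 : z ^+ 2 = t%:~R * z - 1.
  by rewrite -et -h1; ring.
have : t = -2 \/ t = -1 \/ t = 0 \/ t = 1 \/ t = 2.
  by clear -ht; lia.
case=> [tE|[tE|[tE|[tE|tE]]]]; rewrite tE in hz2.
- exists 2%N; split => //.
  have : (z + 1) ^+ 2 = 0 by rewrite sqrrD hz2; ring.
  by move/eqP; rewrite expf_eq0 /= addr_eq0 => /eqP ->; rewrite sqrrN expr1n.
- exists 3%N; split => //.
  apply/eqP; rewrite -subr_eq0; apply/eqP.
  transitivity ((z ^+ 2 - ((-1)%:~R * z - 1)) * (z - 1)); first ring.
  by rewrite hz2 subrr mul0r.
- exists 4%N; split => //.
  apply/eqP; rewrite -subr_eq0; apply/eqP.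
  transitivity ((z ^+ 2 - (0%:~R * z - 1)) * (z ^+ 2 - 1)); first ring.
  by rewrite hz2 subrr mul0r.
- exists 6%N; split => //.
  apply/eqP; rewrite -subr_eq0; apply/eqP.
  transitivity ((z ^+ 2 - (1%:~R * z - 1)) * (z ^+ 4 + z ^+ 3 - z - 1)); first ring.
  by rewrite hz2 subrr mul0r.
- exists 1%N; split => //.
  have : (z - 1) ^+ 2 = 0 by rewrite sqrrB hz2; ring.
  by move/eqP; rewrite expf_eq0 /= subr_eq0 => /eqP ->; rewrite expr1n.
Qed.

Variable z : algC.
Hypothesis zK : inK d z.
Hypothesis z1 : z * z^* = 1.
Hypothesis zR : ~ root_of_unity z.

Let q := sval (sig_eqW (CratP _ (proj1 (inK_trn hd zK)))).
Let eq_q : z + z^* = ratr q := svalP (sig_eqW (CratP _ (proj1 (inK_trn hd zK)))).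
Let A : int := denq q.
Let p : int := numq q.
Let Aa : algC := A%:~R.
Let Aa0 : Aa != 0. Proof. by rewrite intr_eq0 denq_neq0. Qed.
Let E1 : Aa * z + Aa * z^* = p%:~R.
Proof. by rewrite -mulrDr eq_q /ratr /Aa /p /A mulrC divfK. Qed.
Let Bez : exists u v : int, u * p + v * A = 1.
Proof.
have [u [v e]] := Bezoutz p A.
exists u, v; rewrite e /gcdz; have := coprime_num_den q; rewrite /coprime => /eqP ->.
by [].
Qed.

Let AzO : inO d (Aa * z).
Proof.
apply: inO_trn.
  by apply: inK_mul => //; apply: inK_int.
  by rewrite conjM conj_int -mulrDr eq_q /ratr /Aa /p /A mulrC divfK // rpred_int.
by rewrite conjM conj_int mulrACA z1 mulr1 rpredM ?rpred_int.
Qed.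
Let AzcO : inO d (Aa * z^*).
Proof. by have := inO_conj hd AzO; rewrite conjM conj_int. Qed.

Lemma pi_char x : pi_ d z x <-> exists c1 c2, inO d c1 /\ inO d c2 /\ x = c1 * Aa + c2 * (Aa * z^*).
Proof.
have [u [v huv]] := Bez.
split.
- move=> [hx hxz]; exists (u%:~R * (x * z) + v%:~R * x), (u%:~R * x); split; [|split].
  + by apply: inO_add; apply: inO_mul => //; apply: inO_int.
  + by apply: inO_mul => //; apply: inO_int.
  + transitivity (x * (u * p + v * A)%:~R); first by rewrite huv mulr1.
    by rewrite intrD !intrM -E1 /Aa; ring.
- move=> [c1 [c2 [h1 [h2 ->]]]]; split.
  + by apply: inO_add; apply: inO_mul => //; (apply: inO_int || apply: AzcO).
  + have -> : (c1 * Aa + c2 * (Aa * z^*)) * z = c1 * (Aa * z) + c2 * Aa * (z * z^*) by ring.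
    by rewrite z1 mulr1; apply: inO_add; apply: inO_mul => //; (apply: inO_int || apply: AzO).
Qed.

Lemma pi_ideal : is_ideal d (pi_ d z).
Proof.
split; [by move=> x [] | split; [|split]].
- by rewrite /pi_ mul0r; split; apply: inO_0.
- move=> x y [hx hxz] [hy hyz]; split; first exact: inO_add.
  by rewrite mulrDl; apply: inO_add.
- move=> a x ha [hx hxz]; split; first exact: inO_mul.
  by rewrite -mulrA; apply: inO_mul.
Qed.

Lemma pi_Jideal : is_ideal d (pi_ d z) /\ ideal_nonzero (pi_ d z) /\ ideal_proper (pi_ d z) /\
    ideals_coprime (pi_ d z) (conj_ideal (pi_ d z)) /\ ideal_principal d (ideal_mul (pi_ d z) (pi_ d z)).
Proof.
have [u [v huv]] := Bez.
have inpi : forall c1 c2, inO d c1 -> inO d c2 -> pi_ d z (c1 * Aa + c2 * (Aa * z^*)).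
  by move=> c1 c2 h1 h2; apply/pi_char; exists c1, c2.
have O0 := inO_0 d; have O1 := inO_1 d.
split; first exact: pi_ideal.
split.
  exists Aa; split; last by apply/eqP.
  by have := inpi 1 0 O1 O0; rewrite mul0r addr0 mul1r.
split.
  move=> [_ hz]; apply: zR; apply: (O_unit_RU) => //.
  by rewrite mul1r in hz.
split.
  exists (v%:~R * Aa + u%:~R * (Aa * z^*)), (u%:~R * (Aa * z)); split; [|split].
  - by apply: inpi; apply: inO_int.
  - rewrite /conj_ideal !conjM !conj_int.
    by have := inpi 0 u%:~R O0 (inO_int d u); rewrite mul0r add0r.
  - transitivity ((u * p + v * A)%:~R : algC); last by rewrite huv.
    by rewrite intrD !intrM -E1 /Aa; ring.
exists (Aa * z^*); split => // x; split.
- move=> [S [hS ->]].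
  apply: (sum_mult (P := inO d)) => //; first exact: inO_add.
  move=> [x1 x2] /hS [/pi_char [c1 [c2 [h1 [h2 e1]]]] /pi_char [e1' [e2 [h1' [h2' e2']]]]] /=.
  exists (c1 * e1' * (Aa * z) + (c1 * e2 + c2 * e1') * Aa + c2 * e2 * (Aa * z^*)); split.
    have hA : inO d Aa by apply: inO_int.
    have hAz := AzO; have hAzc := AzcO.
    by repeat first [assumption | apply: inO_add | apply: inO_mul].
  move: e1 e2' => /= -> ->; apply/eqP; rewrite -subr_eq0; apply/eqP.
  transitivity (c1 * e1' * Aa * Aa * (1 - z * z^*)); first ring.
  by rewrite z1 subrr mulr0.
- move=> [c [hc ->]].
  exists [:: (c * v%:~R * (Aa * z^*), Aa); (c * u%:~R * Aa, Aa); (c * u%:~R * (Aa * z^*), Aa * z^*)].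
  split.
    have hcv := inO_mul hc (inO_int d v); have hcu := inO_mul hc (inO_int d u).
    have pA : pi_ d z Aa by have := inpi 1 0 O1 O0; rewrite mul0r addr0 mul1r.
    have pg : forall c, inO d c -> pi_ d z (c * (Aa * z^*)).
      by move=> c' hc'; have := inpi 0 c' O0 hc'; rewrite mul0r add0r.
    have pA' : forall c, inO d c -> pi_ d z (c * Aa).
      by move=> c' hc'; have := inpi c' 0 hc' O0; rewrite mul0r addr0.
    move=> [y1 y2]; rewrite !in_cons in_nil orbF => /or3P [] /eqP [-> ->] /=; split => //.
    + exact: pg.
    + exact: pA'.
    + exact: pg.
    + by have := pg 1 O1; rewrite mul1r.
  rewrite !big_cons big_nil addr0 /=.
  transitivity (c * (Aa * z^*) * (u * p + v * A)%:~R); first by rewrite huv mulr1.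
  rewrite intrD !intrM -E1 /Aa.
  apply/eqP; rewrite -subr_eq0; apply/eqP.
  transitivity (c * u%:~R * (A%:~R) ^+ 2 * (z * z^* - 1)); first ring.
  by rewrite z1 subrr mulr0.
Qed.

End P1.


Lemma int_pos_ge1 (x : algC) : x \is a Num.int -> 0 < x -> 1 <= x.
Proof.
move=> hx x0; have := norm_intr_ge1 hx (lt0r_neq0 x0).
by rewrite gtr0_norm.
Qed.

Lemma conj_sum (S : seq (algC * algC)) (F : algC * algC -> algC) :
  (\sum_(p <- S) F p)^* = \sum_(p <- S) (F p)^*.
Proof. exact: rmorph_sum. Qed.

Section P2.
Variable d : nat.
Hypothesis hd : (0 < d)%N.
Variable I : algC -> Prop.
Hypothesis hI : is_ideal d I.
Hypothesis hnz : ideal_nonzero I.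
Hypothesis hpr : ideal_proper I.
Hypothesis hcop : ideals_coprime I (conj_ideal I).
Hypothesis hpri : ideal_principal d (ideal_mul I I).

Let IO := I_O hI.
Let Imul := I_mul hI.
Let Imulr := I_mulr hI.
Let Iadd := I_add hI.

Let n := proj1_sig (constructive_indefinite_description _ (minpos_exists hd hI hnz)).
Let hn : minpos I n := proj2_sig (constructive_indefinite_description _ (minpos_exists hd hI hnz)).
Let nR : algC := n%:R.
Let n0 : nR != 0.
Proof. by case: hn => h _; rewrite pnatr_eq0 -lt0n. Qed.
Let nRJ : nR^* = nR. Proof. exact: conj_nat. Qed.
Let In : I nR. Proof. by case: hn => _ []. Qed.

Let Iint y : I y -> y \is a Num.int -> exists q : int, y = q%:~R * nR.
Proof.
move=> Iy /intrP [k ek]; subst y.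
have [q ->] := minpos_dvd hI hn Iy.
by exists q; rewrite intrM.
Qed.

Let key x y : I x -> I y -> inO d (x * y^* / nR).
Proof.
move=> Ix Iy.
have Ox := IO Ix; have Oy := IO Iy.
have [q1 e1] := Iint (Imulr (inO_conj hd Ox) Ix) (inO_norm hd Ox).
have [q2 e2] := Iint (Imulr (inO_conj hd Oy) Iy) (inO_norm hd Oy).
have Oxy := inO_add Ox Oy.
have [q3 e3] := Iint (Imulr (inO_conj hd Oxy) (Iadd Ix Iy)) (inO_norm hd Oxy).
apply: inO_trn.
- apply: inK_mul; first apply: inK_mul; [by case: Ox | by case: (inO_conj hd Oy) |].
  by apply: (inK_inv hd); apply: (inK_int d n).
- have -> : x * y^* / nR + (x * y^* / nR)^* = (q3 - q1 - q2)%:~R.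
    rewrite !conjE -/nR.
    apply: (mulIf n0); rewrite !intrB !mulrBl -e1 -e2 -e3 !conjE.
    rewrite mulrDl !divfK //; ring.
  exact: rpred_int.
- have -> : x * y^* / nR * (x * y^* / nR)^* = (q1 * q2)%:~R.
    rewrite !conjE -/nR.
    apply: (mulIf n0); apply: (mulIf n0).
    rewrite intrM.
    rewrite !mulrA !divfK //.
    transitivity ((x * x^*) * (y * y^*) * (nR / nR)); first ring.
    by rewrite divff // mulr1 e1 e2; ring.
  exact: rpred_int.
Qed.

Let g : algC := proj1_sig (constructive_indefinite_description _ hpri).
Let gP : inO d g /\ forall x, ideal_mul I I x <-> exists a, inO d a /\ x = a * g :=
  proj2_sig (constructive_indefinite_description _ hpri).
Let gO : inO d g. Proof. by case: gP. Qed.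

Let prodI u v : I u -> I v -> exists c, inO d c /\ u * v = c * g.
Proof.
move=> Iu Iv; case: gP => _ h; apply/h.
exists [:: (u, v)]; split; last by rewrite big_cons big_nil addr0.
by move=> p; rewrite in_cons in_nil orbF => /eqP -> /=.
Qed.

Let prodIc u v : I u^* -> I v^* -> exists c, inO d c /\ u * v = c * g^*.
Proof.
move=> Iu Iv; have [c [hc e]] := prodI Iu Iv.
exists c^*; split; first exact: inO_conj.
by rewrite -conjM -e conjM !conjK.
Qed.

Let gS : exists S : seq (algC * algC), (forall p, p \in S -> I p.1 /\ I p.2) /\ g = \sum_(p <- S) p.1 * p.2.
Proof. by case: gP => _ h; apply/h; exists 1; split; [exact: inO_1 | rewrite mul1r]. Qed.

Let g0 : g != 0.
Proof.
case: hnz => x [Ix x0]; have [c [hc e]] := prodI Ix Ix.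
apply/eqP => g0; rewrite g0 mulr0 in e; apply: x0.
by move/eqP: e; rewrite mulf_eq0 orbb => /eqP.
Qed.

Let alpha_beta : exists a b, I a /\ I b^* /\ a + b = 1.
Proof. by case: hcop => a [b [Ia [Ib ab]]]; exists a, b. Qed.

Let ggn : g * g^* = nR * nR.
Proof.
have [a [b [Ia [Ib ab]]]] := alpha_beta.
have Inc : I nR^* by rewrite nRJ.
have O1 : inO d (nR * nR / (g * g^*)).
  have [c1 [h1 e1]] := prodI Ia Ia.
  have [c2 [h2 e2]] := prodIc Inc Inc.
  have [c3 [h3 e3]] := prodI Ia In.
  have [c4 [h4 e4]] := prodIc Ib Inc.
  have [c5 [h5 e5]] := prodI In In.
  have [c6 [h6 e6]] := prodIc Ib Ib.
  have -> : nR * nR / (g * g^*) = c1 * c2 + 2%:R * c3 * c4 + c5 * c6.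
    have gg0 : g * g^* != 0 by rewrite mul_conjC_eq0.
    apply: (mulIf gg0); rewrite divfK //.
    transitivity (c1 * g * (c2 * g^*) + 2%:R * (c3 * g) * (c4 * g^*) + c5 * g * (c6 * g^*)); last ring.
    rewrite -e1 -e2 -e3 -e4 -e5 -e6.
    transitivity (nR * nR * ((a + b) * (a + b))); first by rewrite ab !mulr1.
    ring.
  have O2' := inO_nat d 2.
  by repeat first [assumption | apply: inO_add | apply: inO_mul].
have O2 : inO d (g * g^* / (nR * nR)).
  have [S [hS eS]] := gS.
  have -> : g * g^* / (nR * nR) = \sum_(p <- S) \sum_(q <- S) ((p.1 * q.1^* / nR) * (p.2 * q.2^* / nR)).
    rewrite eS conj_sum big_distrl /= mulr_suml.
    apply: eq_bigr => p _; rewrite big_distrr /= mulr_suml.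
    apply: eq_bigr => q _; rewrite !conjE.
    by apply: (mulIf n0); apply: (mulIf n0); rewrite !mulrA !invfM !mulrA; field.
  apply: inO_sum => p hp; apply: inO_sum => q hq.
  have [hp1 hp2] := hS p hp; have [hq1 hq2] := hS q hq.
  by apply: inO_mul; apply: key.
have Crat_gg : g * g^* / (nR * nR) \in Crat.
  by apply: rpred_div; [case: (inK_trn hd (proj1 gO)) | apply: rpredM; apply: rpred_nat].
set r := g * g^* / (nR * nR) in O2 Crat_gg.
have r0 : 0 < r.
  by rewrite /r divr_gt0 // ?mul_conjC_gt0 // mulr_gt0 // ltr0n; case: hn.
have rint : r \is a Num.int by apply: Cint_rat_Aint => //; case: O2.
have rVint : r^-1 \is a Num.int.
  apply: Cint_rat_Aint; first by rewrite rpredV.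
  by rewrite /r invf_div; case: O1.
have r1 := int_pos_ge1 rint r0.
have rV0 : 0 < r^-1 by rewrite invr_gt0.
have rV1 := int_pos_ge1 rVint rV0.
have rle : r <= 1.
  have := ler_wpM2l (ltW r0) rV1; rewrite mulr1 mulfV //; exact: lt0r_neq0.
have re : r = 1 by apply/eqP; rewrite eq_le rle r1.
have nn0 : nR * nR != 0 by rewrite mulf_neq0.
by rewrite -[g * g^*](divfK nn0) -/r re mul1r.
Qed.

Let z : algC := nR / g.

Let zK : inK d z.
Proof.
apply: inK_mul; first exact: (inK_int d n).
by apply: (inK_inv hd); case: gO.
Qed.

Let zz : z * z^* = 1.
Proof.
rewrite /z !conjE -/nR.
have gc0 : g^* != 0 by rewrite conjC_eq0.
transitivity ((nR * nR) / (g * g^*)); first by rewrite invfM; ring.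
by rewrite -ggn divff // mulf_neq0.
Qed.

Let pi_eq x : pi_ d z x <-> I x.
Proof.
split.
- move=> [hx hxz].
  have [a [b [Ia [Ib ab]]]] := alpha_beta.
  have [S [hS eS]] := gS.
  have Igb : I (g * b / nR).
    rewrite eS big_distrl /= big_distrl /=.
    apply: (I_sum hI) => p hp; have [hp1 hp2] := hS p hp.
    have -> : p.1 * p.2 * b / nR = p.1 * (p.2 * (b^*)^* / nR) by rewrite conjK; ring.
    by apply: Imulr => //; apply: key.
  have -> : x = x * a + (x * z) * (g * b / nR).
    rewrite /z; transitivity (x * (a + b)); first by rewrite ab mulr1.
    rewrite mulrDr; congr (_ + _).
    transitivity (x * b * (nR / nR) * (g / g)); first by rewrite !divff // !mulr1.
    ring.
  apply: Iadd; first exact: Imul hx Ia.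
  exact: Imul hxz Igb.
- move=> Ix; split; first exact: IO.
  have [c [hc e]] := prodI Ix In.
  by rewrite /z mulrA e mulfK.
Qed.

Lemma P2_main m : ideal_index d I m -> Dvals d m.
Proof.
move=> [f [fO [finj fsurj]]].
exists z; split => //; split => //; split.
  move=> hR.
  have zO : inO d z by split => //; apply: RU_Aint.
  apply: hpr; apply/pi_eq; split; first exact: inO_1.
  by rewrite mul1r.
exists f; split => //; split.
  by move=> i j /pi_eq; apply: finj.
by move=> x hx; have [i hi] := fsurj x hx; exists i; apply/pi_eq.
Qed.

End P2.


Lemma split_mod (e : int) (m : nat) : (0 < m)%N -> exists v r : int, e = v * m%:Z + r /\ 0 <= r < m%:Z.
Proof.
move=> m0; exists (e %/ m)%Z, (e %% m)%Z; split; first exact: divz_eq.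
rewrite modz_ge0 ?ltz_pmod //; last by rewrite -lt0n.
Qed.

Lemma L1 (t e N n q q' : int) : t ^+ 2 + e ^+ 2 = 4 * N -> N = q * n -> t - 1 = q' * n -> 2 <= n <= 4 -> False.
Proof.
move=> E hN hT hn.
have ht : t = q' * n + 1 by lia.
have [n2|[n3|n4]] : n = 2 \/ n = 3 \/ n = 4 by lia.
- have [v [r [er hr]]] := @split_mod e 2 isT.
  have : r = 0 \/ r = 1 by lia.
  case=> hr'; subst; rewrite !expr2 in E; lia.
- have [v [r [er hr]]] := @split_mod e 3 isT.
  have : r = 0 \/ r = 1 \/ r = 2 by lia.
  case=> [hr'|[hr'|hr']]; subst; rewrite !expr2 in E; lia.
- have [v [r [er hr]]] := @split_mod e 2 isT.
  have : r = 0 \/ r = 1 by lia.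
  case=> hr'; subst; rewrite !expr2 in E; lia.
Qed.

Lemma L3 (t k N n q q' : int) : 3 * t ^+ 2 + k ^+ 2 = 12 * N -> N = q * n -> t - 1 = q' * n -> 2 <= n <= 6 -> False.
Proof.
move=> E hN hT hn.
have ht : t = q' * n + 1 by lia.
have [v [r [er hr]]] := @split_mod k 4 isT.
have [a [r2 [ea hr2]]] := @split_mod q' 2 isT.
have [n2|[n3|[n4|[n5|n6]]]] : n = 2 \/ n = 3 \/ n = 4 \/ n = 5 \/ n = 6 by lia.
- have : r = 0 \/ r = 1 \/ r = 2 \/ r = 3 by lia.
  have : r2 = 0 \/ r2 = 1 by lia.
  case=> ?; case=> [?|[?|[?|?]]]; subst; rewrite !expr2 in E; lia.
- clear v r er hr.
  have [v [r [er hr]]] := @split_mod k 3 isT.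
  have : r = 0 \/ r = 1 \/ r = 2 by lia.
  case=> [?|[?|?]]; subst; rewrite !expr2 in E; lia.
- have : r = 0 \/ r = 1 \/ r = 2 \/ r = 3 by lia.
  case=> [?|[?|[?|?]]]; subst; rewrite !expr2 in E; lia.
- clear v r er hr.
  have [v [r [er hr]]] := @split_mod k 5 isT.
  have : r = 0 \/ r = 1 \/ r = 2 \/ r = 3 \/ r = 4 by lia.
  case=> [?|[?|[?|[?|?]]]]; subst; rewrite !expr2 in E; lia.
- have : r = 0 \/ r = 1 \/ r = 2 \/ r = 3 by lia.
  have : r2 = 0 \/ r2 = 1 by lia.
  case=> ?; case=> [?|[?|[?|?]]]; subst; rewrite !expr2 in E; lia.
Qed.

Lemma rat_sq_int (r : rat) : r ^+ 2 \is a Num.int -> r \is a Num.int.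
Proof.
move=> h; rewrite -(Cint_rat r); apply: Cint_rat_Aint; first exact: Crat_rat.
apply: (@quadA _ 0 (- (ratr r) ^+ 2)); first exact: rpred0.
  by rewrite -rmorphXn -rmorphN Cint_rat rpredN.
by rewrite mul0r subr0 addrN.
Qed.

Lemma rat_int (r : rat) : r \is a Num.int -> exists k : int, r = k%:~R.
Proof. by move/intrP. Qed.

Section Final.
Variable d : nat.
Hypothesis hd : (0 < d)%N.
Local Notation s := (sqrtC (- (d%:R : algC))).

Lemma inO_s : inO d s.
Proof.
split; first exact: inK_s.
apply: (@quadA _ 0 d%:R); [exact: rpred0 | exact: rpred_nat |].
by rewrite mul0r subr0 expr2 s2 addNr.
Qed.

Lemma D_to_J m : Dvals d m -> Jnorms d m.
Proof.
move=> [z [zK [z1 [zR hidx]]]].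
have [h1 [h2 [h3 [h4 h5]]]] := pi_Jideal hd zK z1 zR.
by exists (pi_ d z).
Qed.

Lemma J_to_D m : Jnorms d m -> Dvals d m.
Proof.
move=> [I [h1 [h2 [h3 [h4 [h5 h6]]]]]].
exact: (P2_main hd h1 h2 h3 h4 h5).
Qed.

Lemma Dvals_of z n : inK d z -> z * z^* = 1 -> ~ root_of_unity z -> minpos (pi_ d z) n -> Dvals d n.
Proof.
move=> zK z1 zR hn.
have [h1 [h2 [h3 [h4 h5]]]] := pi_Jideal hd zK z1 zR.
exists z; split => //; split => //; split => //.
exact: (index_eq hd h1 hn h4).
Qed.

Lemma Dvals_of' z : inK d z -> z * z^* = 1 -> ~ root_of_unity z -> exists n, Dvals d n.
Proof.
move=> zK z1 zR.
have [h1 [h2 [h3 [h4 h5]]]] := pi_Jideal hd zK z1 zR.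
have [n hn] := minpos_exists hd h1 h2.
by exists n; apply: (Dvals_of zK z1 zR hn).
Qed.

Lemma pi_tr z (k : nat) : pi_ d z k%:R -> k%:R * (z + z^*) \is a Num.int.
Proof.
move=> [_ h]; have := inO_tr hd h.
by rewrite conjM conj_nat mulrDr.
Qed.

Lemma decomp a1 b1 : let a := ratr a1 + ratr b1 * s in
  a + a^* = ratr (a1 + a1) /\ a * a^* = ratr (a1 ^+ 2 + d%:R * b1 ^+ 2).
Proof.
rewrite /= !conjE (sJ hd); split; first by rewrite rmorphD /=; ring.
rewrite rmorphD rmorphM !rmorphXn rmorph_nat /=.
transitivity (ratr a1 ^+ 2 - ratr b1 ^+ 2 * (s * s) : algC); first ring.
by rewrite s2; ring.
Qed.

Lemma J_data I n : is_ideal d I -> ideal_proper I -> ideals_coprime I (conj_ideal I) -> minpos I n ->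
  exists (a1 b1 : rat) (t N q q' : int), a1 + a1 = t%:~R /\ a1 ^+ 2 + d%:R * b1 ^+ 2 = N%:~R /\
    N = q * n%:Z /\ t - 1 = q' * n%:Z /\ (2 <= n)%N.
Proof.
move=> hI hpr [a [b [Ia [Ib ab]]]] hn.
have Oa := I_O hI Ia.
have [a1 [b1 ea]] := proj1 Oa.
have [eT eN] := decomp a1 b1; rewrite -ea in eT eN.
have Tint := inO_tr hd Oa; have Nint := inO_norm hd Oa.
rewrite eT Cint_rat in Tint; rewrite eN Cint_rat in Nint.
have [t et] := rat_int Tint; have [N eN'] := rat_int Nint.
have IN : I N%:~R.
  have -> : (N%:~R : algC) = a * a^* by rewrite eN eN' rmorph_int.
  by apply: (I_mulr hI) => //; apply: (inO_conj hd).
have [q hq] := minpos_dvd hI hn IN.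
have IT : I (t - 1)%:~R.
  have -> : ((t - 1)%:~R : algC) = a - b^*.
    have eT' : a + a^* = t%:~R by rewrite eT et rmorph_int.
    rewrite intrB -eT'.
    have hb : a^* + b^* = 1 by rewrite -conjD ab (rmorph1 Num.conj).
    by rewrite -hb; ring.
  exact: (I_sub hI).
have [q' hq'] := minpos_dvd hI hn IT.
exists a1, b1, t, N, q, q'; do !split => //.
case: hn => n0 [In _]; rewrite ltn_neqAle n0 andbT; apply/negP => /eqP n1.
by apply: hpr; rewrite -n1 in In.
Qed.

End Final.


Section Ex.
Variable d : nat.
Hypothesis hd : (0 < d)%N.
Local Notation s := (sqrtC (- (d%:R : algC))).

Lemma inK_nat (k : nat) : inK d k%:R.
Proof. exact: (inK_int d k). Qed.

Lemma ex_z (c e M : nat) : (0 < M)%N -> (c ^ 2 + d * e ^ 2 = M ^ 2)%N ->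
  let z := (c%:R + e%:R * s) / M%:R in
  [/\ inK d z, z * z^* = 1,
     (forall k : nat, k%:R * (z + z^*) = ratr (k%:R * (2 * c)%:R / M%:R)) &
     pi_ d z M%:R].
Proof.
move=> M0 hce z.
have M0' : (M%:R : algC) != 0 by rewrite pnatr_eq0 -lt0n.
have hce' : (c%:R : algC) ^+ 2 + d%:R * e%:R ^+ 2 = M%:R ^+ 2.
  by have := congr1 (fun x : nat => x%:R : algC) hce; rewrite /= natrD natrM !natrX.
have zc : z^* = (c%:R - e%:R * s) / M%:R by rewrite /z !conjE (sJ hd); ring.
split.
- apply: inK_mul; last by apply: (inK_inv hd); apply: inK_nat.
  by apply: inK_add; [apply: inK_nat | apply: inK_mul; [apply: inK_nat | apply: inK_s]].
- rewrite zc /z.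
  transitivity ((c%:R ^+ 2 - e%:R ^+ 2 * (s * s)) * (M%:R^-1 * M%:R^-1) : algC); first ring.
  have -> : (c%:R ^+ 2 - e%:R ^+ 2 * (s * s) : algC) = M%:R * M%:R by rewrite s2 -expr2 -hce'; ring.
  by rewrite mulrACA !mulfV // mulr1.
- move=> k; rewrite zc /z fmorph_div rmorphM !rmorph_nat natrM.
  apply: (mulIf M0'); rewrite divfK //.
  transitivity (k%:R * (c%:R + e%:R * s + (c%:R - e%:R * s)) * (M%:R / M%:R) : algC); first ring.
  by rewrite divff // mulr1; ring.
- split; first exact: inO_nat.
  rewrite /z mulrC divfK //.
  by apply: inO_add; [apply: inO_nat | apply: inO_mul; [apply: inO_nat | apply: inO_s]].
Qed.

Lemma ex_exists (c e M : nat) : (0 < M)%N -> (c ^ 2 + d * e ^ 2 = M ^ 2)%N ->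
  ((2 * c)%:R / M%:R : rat) \isn't a Num.int -> exists n, Dvals d n.
Proof.
move=> M0 hce hni.
have [zK zz ztr _] := ex_z M0 hce.
apply: (Dvals_of' hd zK zz) => hR.
have e1 := ztr 1%N; rewrite !mulr1n !mul1r in e1.
by have := RU_tr hd zK hR; rewrite e1 Cint_rat => h; rewrite h in hni.
Qed.

Lemma ex_exact (c e M : nat) : (1 < M)%N -> (c ^ 2 + d * e ^ 2 = M ^ 2)%N ->
  (forall k, (0 < k < M)%N -> (k%:R * (2 * c)%:R / M%:R : rat) \isn't a Num.int) -> Dvals d M.
Proof.
move=> M1 hce hni.
have M0 : (0 < M)%N by apply: ltn_trans M1.
have [zK zz ztr piM] := ex_z M0 hce.
have zR : ~ root_of_unity ((c%:R + e%:R * s) / M%:R).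
  move=> hR; have e1 := ztr 1%N; rewrite !mulr1n !mul1r in e1.
  have h1 := hni 1%N; rewrite /= M1 in h1; have := h1 isT; rewrite !mulr1n !mul1r => /negP; apply.
  by have := RU_tr hd zK hR; rewrite e1 Cint_rat.
apply: (Dvals_of hd zK zz zR); split => //; split => // k /andP [k0 kM] pik.
have := pi_tr hd pik; rewrite ztr Cint_rat => h.
by have := hni k; rewrite k0 kM h => /(_ isT).

Qed.

End Ex.


Lemma J_lb (d : nat) (hd : (0 < d)%N) m : Jnorms d m ->
  exists (n : nat) (a1 b1 : rat) (t N q q' : int), (n <= m)%N /\ a1 + a1 = t%:~R /\
    a1 ^+ 2 + d%:R * b1 ^+ 2 = N%:~R /\ N = q * n%:Z /\ t - 1 = q' * n%:Z /\ (2 <= n)%N.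
Proof.
move=> [I [h1 [h2 [h3 [h4 [h5 h6]]]]]].
have [n hn] := minpos_exists hd h1 h2.
have nm := index_ge h1 hn h6.
have [a1 [b1 [t [N [q [q' [e1 [e2 [e3 [e4 e5]]]]]]]]]] := J_data hd h1 h3 h4 hn.
by exists n, a1, b1, t, N, q, q'.
Qed.

Lemma J_lb1 m : Jnorms 1 m -> (5 <= m)%N.
Proof.
move=> hJ; have [n [a1 [b1 [t [N [q [q' [nm [et [eN [eq [eq' n2]]]]]]]]]]]] := J_lb (isT : (0 < 1)%N) hJ.
have hsq : (b1 + b1) ^+ 2 \is a Num.int.
  have -> : (b1 + b1) ^+ 2 = (4 * N - t ^+ 2)%:~R.
    rewrite intrB intrM rmorphXn /= -et -eN; ring.
  exact: rpred_int.
have [e ee] := rat_int (rat_sq_int hsq).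
have E : t ^+ 2 + e ^+ 2 = 4 * N.
  apply/eqP; rewrite -(eqr_int rat) intrD intrM !rmorphXn /= -et -ee -eN; apply/eqP; ring.
rewrite leqNgt; apply/negP => h.
apply: (L1 E eq eq'); apply/andP; split; rewrite ?lez_nat; lia.
Qed.

Lemma J_lb3 m : Jnorms 3 m -> (7 <= m)%N.
Proof.
move=> hJ; have [n [a1 [b1 [t [N [q [q' [nm [et [eN [eq [eq' n2]]]]]]]]]]]] := J_lb (isT : (0 < 3)%N) hJ.
have hsq : (b1 *+ 6) ^+ 2 \is a Num.int.
  have -> : (b1 *+ 6) ^+ 2 = (3 * (4 * N - t ^+ 2))%:~R.
    rewrite intrM intrB intrM rmorphXn /= -et -eN; ring.
  exact: rpred_int.
have [k ek] := rat_int (rat_sq_int hsq).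
have E : 3 * t ^+ 2 + k ^+ 2 = 12 * N.
  apply/eqP; rewrite -(eqr_int rat) intrD !intrM ?rmorphXn /= -et -ek -eN; apply/eqP. ring.
rewrite leqNgt; apply/negP => h.
apply: (L3 E eq eq'); apply/andP; split; rewrite ?lez_nat; lia.
Qed.

Lemma Dvals_nonempty (d : nat) (hd : (0 < d)%N) (hsf : squarefree_nat d) : exists n, Dvals d n.
Proof.
apply: (@ex_exists d hd ((4 - d) + (d - 4)) 4 (4 + d)) => //.
  by clear hsf; nia.
apply/negP => /intrP [j ej].
have E : 2%:Z * ((4 - d) + (d - 4))%N%:Z = j * (4 + d)%N%:Z.
  apply/eqP; rewrite -(eqr_int rat) !intrM; apply/eqP.
  have M0 : ((4 + d)%N%:R : rat) != 0 by rewrite pnatr_eq0.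
  by rewrite -ej natrM divfK.
have : d = 4%N \/ d = 12%N.
  have [hj|[hj|[hj|hj]]] : j <= -1 \/ j = 0 \/ j = 1 \/ 2 <= j by lia.
  - nia.
  - subst; lia.
  - subst; lia.
  - nia.
by case=> hd'; have := hsf 2 isT; rewrite hd'.
Qed.

Theorem lemma28 (d : nat) (hd : (0 < d)%N) (hsf : squarefree_nat d) :
  exists m : nat, least_nat (Dvals d) m /\ least_nat (Jnorms d) m /\
    (d = 1%N -> m = 5%N) /\ (d = 3%N -> m = 7%N).
Proof.
have [m [Dm mmin]] := least_exists (Dvals_nonempty hd hsf).
have hJ : least_nat (Jnorms d) m.
  split; first exact: D_to_J.
  by move=> k /(J_to_D hd) /mmin.
exists m; split; first by split.
split => //; split => hd1; subst d.
- apply/eqP; rewrite eqn_leq; apply/andP; split.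
    apply: mmin; apply: (@ex_exact 1 isT 3 4 5) => //.
    by move=> k; case: k => [|[|[|[|[|k]]]]].
  by apply: J_lb1; case: hJ.
- apply/eqP; rewrite eqn_leq; apply/andP; split.
    apply: mmin; apply: (@ex_exact 3 isT 1 4 7) => //.
    by move=> k; case: k => [|[|[|[|[|[|[|k]]]]]]].
  by apply: J_lb3; case: hJ.
Qed.
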